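(* Let $G=(V,E)$ be a finite tree, fix a vertex $i\in V$, and let $\phi:V\to\mathbb{R}_{\ge 0}$ be defined as below. Then for every starting vertex $j\in V$, the path $x_0=j,x_1,x_2,\dots$ produced by the descent rule (at each step $x_{k+1}$ is a neighbor of $x_k$ at which $\phi$ is minimal among all neighbors of $x_k$, continuing until $x_k=i$) is the shortest path from $j$ to $i$ in $G$, i.e. it has length equal to the graph distance $d(j,i)$, regardless of how ties are broken.
   Context: $L=D-A$ is the Laplacian matrix of $G$ ($D$ diagonal with $D_{vv}=\deg_G(v)$, $A$ the adjacency matrix). Let $C_1,\dots,C_m$ be the connected components of $G-i$ (the graph with $i$ and its incident edges deleted), and let $L_{C_k}$ denote the principal submatrix of $L$ indexed by the vertices of $C_k$ (with degrees taken in $G$). The function $\phi$ is defined by $\phi(i)=0$ and, on each $C_k$, $\phi$ equals a strictly positive eigenvector of $L_{C_k}$ associated with its smallest eigenvalue (this eigenvalue is positive and simple, and such a positive eigenvector exists and is unique up to positive scaling). *)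

(* Defs.v *)
From HB Require Import structures.
From mathcomp Require Import all_boot all_order all_algebra.
From mathcomp Require Import reals.
Set Implicit Arguments. Unset Strict Implicit. Unset Printing Implicit Defensive.
Import Order.TTheory GRing.Theory Num.Theory.
Local Open Scope ring_scope.

Section Defs.
Variable V : finType.
Variable e : rel V.

Definition is_simple_graph : Prop := symmetric e /\ irreflexive e.
Definition is_connected : Prop := forall x y : V, connect e x y.
Definition is_acyclic : Prop :=
  forall s : seq V, uniq s -> (3 <= size s)%N -> ~~ cycle e s.
Definition is_tree : Prop := [/\ is_simple_graph, is_connected & is_acyclic].

Definition deg (v : V) : nat := #|[set u | e v u]|.

Definition laplacian (R : realType) (v u : V) : R :=
  if v == u then (deg v)%:R else if e v u then -1 else 0.

Definition del_rel (i : V) : rel V := fun x y => [&& e x y, x != i & y != i].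

Definition comp (i v : V) : {set V} :=
  [set u | (u != i) && connect (del_rel i) v u].

(* mu is an eigenvalue of the principal submatrix L_C of L indexed by C
   (vectors indexed by C are represented by functions V -> R, only their
   values on C matter) *)
Definition is_eigenpair_sub (R : realType) (C : {set V}) (mu : R) (f : V -> R) :
  Prop :=
  (exists w, w \in C /\ f w != 0) /\
  forall w, w \in C -> \sum_(u in C) laplacian R w u * f u = mu * f w.

Definition is_eigenvalue_sub (R : realType) (C : {set V}) (mu : R) : Prop :=
  exists f : V -> R, is_eigenpair_sub C mu f.

Definition is_smallest_eigenvalue_sub (R : realType) (C : {set V}) (lam : R) :
  Prop :=
  is_eigenvalue_sub C lam /\ forall mu : R, is_eigenvalue_sub C mu -> lam <= mu.

Definition is_phi (R : realType) (i : V) (phi : V -> R) : Prop :=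
  phi i = 0 /\
  forall v, v != i ->
    let C := comp i v in
    (forall u, u \in C -> 0 < phi u) /\
    exists lam : R, is_smallest_eigenvalue_sub C lam /\
      (forall w, w \in C -> \sum_(u in C) laplacian R w u * phi u = lam * phi w).

Definition is_dist (j i : V) (n : nat) : Prop :=
  (exists p : seq V, [/\ size p = n, path e j p & last j p = i]) /\
  forall p : seq V, path e j p -> last j p = i -> (n <= size p)%N.

Definition is_descent (R : realType) (phi : V -> R) (i j : V) (x : nat -> V) :
  Prop :=
  x 0%N = j /\
  forall k : nat, x k != i ->
    e (x k) (x k.+1) /\ forall y, e (x k) y -> phi (x k.+1) <= phi y.

End Defs.

(* Main.v *)
Require Import Defs.
From HB Require Import structures.
From mathcomp Require Import all_boot all_order all_algebra.
From mathcomp Require Import reals.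
From mathcomp Require Import zify ring lra.
Set Implicit Arguments. Unset Strict Implicit. Unset Printing Implicit Defensive.
Import Order.TTheory GRing.Theory Num.Theory.
Local Open Scope ring_scope.

Section Dist.
Variables (V : finType) (e : rel V) (i : V).
Hypothesis esym : symmetric e.
Hypothesis eirr : irreflexive e.
Hypothesis econn : forall x y : V, connect e x y.
Hypothesis eacyc : is_acyclic e.

Definition reachP (v : V) : pred nat :=
  fun n => [exists p : n.-tuple V, path e v p && (last v p == i)].

Lemma reach_ex v : exists n, reachP v n.
Proof.
have /connectP [p pp li] := econn v i.
exists (size p); apply/existsP; exists (in_tuple p) => /=.
by rewrite pp -li eqxx.
Qed.

Definition d v := ex_minn (reach_ex v).

Lemma D1 v : exists p : seq V, [/\ size p = d v, path e v p & last v p = i].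
Proof.
rewrite /d; case: ex_minnP => n /existsP [p /andP [pp /eqP li]] _.
by exists p; rewrite size_tuple.
Qed.

Lemma D2 v p : path e v p -> last v p = i -> (d v <= size p)%N.
Proof.
move=> pp li; rewrite /d; case: ex_minnP => n _ H; apply: H.
apply/existsP; exists (in_tuple p) => /=; by rewrite pp li eqxx.
Qed.

Lemma D3 v : (d v == 0)%N = (v == i).
Proof.
apply/idP/idP.
  by move/eqP=> dv; have [p [sp _ li]] := D1 v; move: sp; rewrite dv => /size0nil sp; rewrite -li sp.
move/eqP=> ->; have := @D2 i [::] erefl erefl; by rewrite leqn0.
Qed.

Lemma D4 v u : e v u -> (d v <= (d u).+1)%N.
Proof.
move=> evu; have [p [sp pp li]] := D1 u.
have := @D2 v (u :: p); rewrite /= evu pp sp; apply => //.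
Qed.

Lemma D5 v : v != i -> exists u, e v u /\ d u = (d v).-1.
Proof.
move=> vi; have [p [sp pp li]] := D1 v.
case: p sp pp li => [|u p] sp pp li.
  by move: vi; rewrite -li eqxx.
move: pp => /= /andP [evu pp].
exists u; split => //.
have h1 := D2 pp li; have h2 := D4 evu.
rewrite -sp /=; rewrite -sp /= in h2; lia.
Qed.

Lemma del_path_notin v a q : path (del_rel e v) a q -> v \notin q.
Proof.
elim: q a => [|y q IH] a //= /andP [/and3P [_ _ yv] pq].
by rewrite in_cons negb_or eq_sym yv (IH y).
Qed.

Lemma del_sub v : subrel (del_rel e v) e.
Proof. by move=> x y /and3P []. Qed.

Lemma del_sym v : symmetric (del_rel e v).
Proof. by move=> x y; rewrite /del_rel esym andbCA andbA [(y != v) && _]andbC -andbA andbCA. Qed.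

Lemma cyc_lemma v a b : e v a -> e v b -> a != b -> ~~ connect (del_rel e v) a b.
Proof.
move=> eva evb ab; apply/negP => /connectP [p pp lb].
have [p' [pp' up' lb']] : exists p', [/\ path (del_rel e v) a p', uniq (a :: p') & last a p' = b].
  by rewrite lb; case: (shortenP pp) => p' pp' up' _; exists p'.
have := eacyc (s := v :: a :: p').
have vnot : v \notin a :: p'.
  rewrite in_cons negb_or (del_path_notin pp') andbT.
  by apply/negP => /eqP av; move: eva; rewrite av eirr.
move: (vnot) (up'); rewrite /= => -> -> /=.
case: p' pp' up' lb' vnot => [|y q] pp' up' lb' vnot.
  by move: ab; rewrite -lb' /= eqxx.
move=> /(_ isT isT); apply/negP/negPn.
rewrite /= eva /=; rewrite -/(path e a (rcons (y :: q) v)) rcons_path.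
have := sub_path (@del_sub v) pp'; rewrite /= => /andP [-> ->] /=.
by move: lb' => /= ->; rewrite esym.
Qed.


Lemma Sconn n a v : d a = n -> (n < d v)%N -> connect (del_rel e v) a i.
Proof.
elim: n a => [|n IH] a da ltv.
  by move/eqP: da; rewrite D3 => /eqP ->; apply: connect0.
have ai : a != i by rewrite -D3 da.
have [u [eau du]] := D5 ai.
rewrite da /= in du.
apply: connect_trans (IH u du _); last by lia.
apply: connect1; rewrite /del_rel eau /=.
apply/andP; split; apply/eqP => h; move: ltv; rewrite -h; lia.
Qed.

Lemma lemA u v : e u v -> d u != d v.
Proof.
move=> euv; apply/eqP => duv.
have ui : u != i.
  apply/negP => /eqP ui; move/eqP: (duv); rewrite ui.
  have := D3 i; rewrite eqxx => /eqP -> ; rewrite eq_sym D3 => /eqP vi.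
  by move: euv; rewrite ui vi eirr.
have vi : v != i by rewrite -D3 -duv D3.
have [pu [eup dpu]] := D5 ui.
have [w [evw dw]] := D5 vi.
have dpos : (0 < d u)%N by rewrite lt0n D3.
have vpu : v != pu by apply/eqP => h; move: dpu; rewrite -h duv; lia.
have := cyc_lemma euv eup vpu; apply/negP/negPn.
have symd := sym_connect_sym (@del_sym u).
apply: (@connect_trans _ _ i); last first.
  rewrite symd; apply: (@Sconn (d pu)) => //; lia.
have uv : v != u by apply/eqP => h; move: euv; rewrite h eirr.
apply: (@connect_trans _ _ w); last first.
  apply: (@Sconn (d w)) => //; lia.
apply: connect1; rewrite /del_rel evw uv /=.
by apply/eqP => h; move: dw; rewrite h; lia.
Qed.

Lemma lemB v a b : v != i -> e v a -> e v b -> d a = (d v).-1 -> d b = (d v).-1 -> a = b.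
Proof.
move=> vi eva evb da db; apply/eqP/negPn/negP => ab.
have dpos : (0 < d v)%N by rewrite lt0n D3.
have := cyc_lemma eva evb ab; apply/negP/negPn.
have symd := sym_connect_sym (@del_sym v).
apply: (@connect_trans _ _ i).
  apply: (@Sconn (d a)) => //; lia.
rewrite symd; apply: (@Sconn (d b)) => //; lia.
Qed.

Lemma lemN v u : e v u -> d u = (d v).+1 \/ (d u).+1 = d v.
Proof.
move=> evu; have h1 := D4 evu; have h2 := D4 (u := v) (v := u); rewrite esym in h2.
have h3 := lemA evu; have := h2 evu; move: h3; lia.
Qed.


Lemma exc n b : d b = n.+1 -> exists c, e c i /\ connect (del_rel e i) b c.
Proof.
elim: n b => [|n IH] b db.
  have bi : b != i by rewrite -D3 db.
  have [u [ebu du]] := D5 bi; rewrite db /= in du.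
  by move/eqP: du; rewrite D3 => /eqP <-; exists b; rewrite connect0.
have bi : b != i by rewrite -D3 db.
have [q [ebq dq]] := D5 bi; rewrite db /= in dq.
have qi : q != i by rewrite -D3 dq.
have [c [eci cc]] := IH q dq; exists c; split => //.
apply: connect_trans cc; apply: connect1; by rewrite /del_rel ebq bi qi.
Qed.

Variables (R : realType) (phi : V -> R).
Hypothesis hphi : is_phi e i phi.

Lemma nbr_comp b w u : w \in Defs.comp e i b -> e w u -> u != i -> u \in Defs.comp e i b.
Proof.
rewrite !inE => /andP [wi cw] ewu ui; rewrite ui /=.
by apply: connect_trans cw (connect1 _); rewrite /del_rel ewu wi ui.
Qed.

Lemma rowN b w : w \in Defs.comp e i b ->
  \sum_(u in Defs.comp e i b) laplacian e R w u * phi u = \sum_(u | e w u) (phi w - phi u).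
Proof.
move=> wC.
have -> : \sum_(u in Defs.comp e i b) laplacian e R w u * phi u =
   \sum_u ((if u == w then (deg e w)%:R * phi w else 0) - (if e w u then phi u else 0)).
  rewrite big_mkcond; apply: eq_bigr => u _.
  case: (boolP (u \in Defs.comp e i b)) => uC.
    rewrite /laplacian; case: (eqVneq u w) => [->|uw]; first by rewrite eirr subr0.
    by case: (e w u); rewrite ?mulN1r ?mul0r sub0r ?oppr0.
  case: (eqVneq u w) => [h|uw]; first by move: uC; rewrite h wC.
  case ewu: (e w u); last by rewrite subr0.
  case: (eqVneq u i) => [->|ui]; first by rewrite hphi.1 subr0.
  by move: uC; rewrite (nbr_comp wC ewu ui).
rewrite sumrB -!big_mkcond big_pred1_eq sumrB.
congr (_ - _).
rewrite (@eq_bigl _ _ _ _ _ _ (fun u => u \in [set u | e w u])); last by move=> u; rewrite inE.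
by rewrite sumr_const mulr_natl.
Qed.


Lemma inC_self b : b != i -> b \in Defs.comp e i b.
Proof. by move=> bi; rewrite inE bi connect0. Qed.

Lemma lam_pos b lam : b != i ->
  (forall w, w \in Defs.comp e i b ->
     \sum_(u in Defs.comp e i b) laplacian e R w u * phi u = lam * phi w) -> 0 < lam.
Proof.
move=> bi eq.
set C := Defs.comp e i b.
have pos := (hphi.2 b bi).1.
pose G w u := if e w u then phi w - phi u else 0.
have iC : i \notin C by rewrite inE eqxx.
have inner w : w \in C -> \sum_(u | e w u) (phi w - phi u) =
     \sum_(u in C) G w u + (if e w i then phi w else 0).
  move=> wC; rewrite big_mkcond (bigID (fun u => u \in C)) /=; congr (_ + _).
  rewrite (bigD1 i) //= big1 ?addr0; first by rewrite /G hphi.1 subr0.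
  move=> u /andP [uC ui]; rewrite /G; case ewu: (e w u) => //.
  by move: uC; rewrite (nbr_comp wC ewu ui).
have X0 : \sum_(w in C) \sum_(u in C) G w u = 0.
  set X := (X in X = 0).
  have : X = - X.
    rewrite {1}/X exchange_big /= /X -sumrN; apply: eq_bigr => u _.
    rewrite -sumrN; apply: eq_bigr => w _; rewrite /G esym.
    by case: (e u w) => //; rewrite ?opprB ?oppr0.
  lra.
have H : lam * \sum_(w in C) phi w = \sum_(w in C) (if e w i then phi w else 0).
  rewrite mulr_sumr.
  transitivity (\sum_(w in C) \sum_(u | e w u) (phi w - phi u)).
    by apply: eq_bigr => w wC; rewrite -(@rowN b) // eq.
  rewrite (eq_bigr _ inner) big_split /= X0 add0r //.
have [c [eci cc]] := @exc (d b).-1 b (ltac:(have := D3 b; rewrite (negbTE bi); case: (d b) => //)).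
have cC : c \in C.
  rewrite inE cc andbT; apply/eqP => h; by move: eci; rewrite h eirr.
have Ypos : 0 < \sum_(w in C) (if e w i then phi w else 0).
  rewrite (bigD1 c) //= eci.
  have : 0 <= \sum_(w in C | w != c) (if e w i then phi w else 0).
    apply: sumr_ge0 => w /andP [wC _]; case: (e w i) => //; exact: ltW (pos w wC).
  have := pos c cC; lra.
have Spos : 0 < \sum_(w in C) phi w.
  rewrite (bigD1 b) ?inC_self //=.
  have : 0 <= \sum_(w in C | w != b) phi w.
    apply: sumr_ge0 => w /andP [wC _]; exact: ltW (pos w wC).
  have := pos b (inC_self bi); lra.
by rewrite -(pmulr_lgt0 _ Spos) H.
Qed.


Definition meas b := #|[set w | (d b < d w)%N]|.

Lemma meas_lt b u : d u = (d b).+1 -> (meas u < meas b)%N.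
Proof.
move=> du; apply: proper_card; apply/properP; split.
  apply/subsetP => w; rewrite !inE; lia.
by exists u; rewrite !inE du ?ltnn //.
Qed.

Lemma lemM m : forall a b, (meas b < m)%N -> e a b -> d b = (d a).+1 -> phi a < phi b.
Proof.
elim: m => [|m IH] a b //= mb eab db.
have bi : b != i by rewrite -D3 db.
have [pos [lam [_ eq]]] := hphi.2 b bi.
have lp := lam_pos bi eq.
have E := eq b (inC_self bi); rewrite (@rowN b) ?inC_self // in E.
have eba : e b a by rewrite esym.
rewrite (bigD1 a) //= in E.
have : \sum_(u | e b u && (u != a)) (phi b - phi u) <= 0.
  apply: sumr_le0 => u /andP [ebu ua].
  case: (lemN ebu) => du.
    have := IH b u (leq_trans (meas_lt du) mb) ebu du; lra.
  have dua : d u = d a by move: du; rewrite db => -[].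
  have := @lemB b a u bi eba ebu; rewrite db /= dua => /(_ erefl erefl) au.
  by move: ua; rewrite au eqxx.
have := pos b (inC_self bi) => pb.
have : 0 < lam * phi b by apply: mulr_gt0.
lra.
Qed.

Lemma Mono a b : e a b -> d b = (d a).+1 -> phi a < phi b.
Proof. exact: (@lemM (meas b).+1). Qed.

Lemma step v y : v != i -> e v y -> (forall z, e v z -> phi y <= phi z) -> d y = (d v).-1.
Proof.
move=> vi evy hmin.
case: (lemN evy) => dy; last by rewrite -dy.
have [p [evp dp]] := D5 vi.
have dpos : (0 < d v)%N by rewrite lt0n D3.
have h1 := Mono (a:=p) (b:=v); rewrite esym in h1.
have A1 := h1 evp ltac:(lia).
have A2 := Mono evy dy.
have A3 := hmin p evp.
by move: (lt_le_trans (lt_trans A1 A2) A3); rewrite ltxx.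
Qed.

End Dist.

Theorem theorem2 (R : realType) (V : finType) (e : rel V) (i : V) (phi : V -> R) :
  is_tree e -> is_phi e i phi ->
  forall (j : V) (x : nat -> V), is_descent e phi i j x ->
    exists n : nat, [/\ is_dist e j i n, x n = i &
                        forall k : nat, (k < n)%N -> x k != i].
Proof.
move=> [[esym eirr] econn eacyc] hphi j x [x0 hx].
have dk : forall k, (k <= d i econn j)%N -> d i econn (x k) = (d i econn j - k)%N.
  elim => [|k IH] hk; first by rewrite x0 subn0.
  have IH' := IH (ltnW hk).
  have xi : x k != i by rewrite -(D3 i econn) IH'; lia.
  have [exk hmin] := hx k xi.
  rewrite (step esym eirr econn eacyc hphi xi exk hmin) IH'; lia.
exists (d i econn j); split.
- split; first by have [p [? ? ?]] := D1 i econn j; exists p.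
  by move=> p pp li; exact: (D2 econn).
- by apply/eqP; rewrite -(D3 i econn) dk // subnn.
- by move=> k hk; rewrite -(D3 i econn) dk ?(ltnW hk) //; lia.
Qed.
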